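(* Let $\varphi$ be a sublinear metric-compatible function and $T\in\mathrm{Aut}(X,\mu)$ aperiodic. Then for every $U\in[T]_\varphi$, $\lim_{n\to\infty}\frac{1}{n}d_{\varphi,T}(U^n,\mathrm{id})=0$.
   Context: $(X,\mu)$ standard atomless probability space; $\mathrm{Aut}(X,\mu)$ measure-preserving transformations modulo null sets. For aperiodic $T$, $[T]$ is the set of $U\in\mathrm{Aut}(X,\mu)$ with $U(x)=T^{c_U(x)}(x)$ a.e. for a measurable $c_U:X\to\mathbb Z$. $\varphi:\mathbb R_+\to\mathbb R_+$ is metric-compatible if subadditive, non-decreasing, $\varphi(0)=0$, $\varphi(t)>0$ for $t>0$; sublinear if $\varphi(t)/t\to0$. $[T]_\varphi=\{U\in[T]:\int_X\varphi(|c_U|)d\mu<\infty\}$ and $d_{\varphi,T}(U,V)=\int_X\varphi(|c_U(x)-c_V(x)|)d\mu$. *)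

(* Defs.v *)
From HB Require Import structures.
From mathcomp Require Import all_boot all_order all_algebra.
From mathcomp Require Import all_classical all_reals all_analysis.
Set Implicit Arguments. Unset Strict Implicit. Unset Printing Implicit Defensive.
Import Order.TTheory GRing.Theory Num.Theory.
Import numFieldNormedType.Exports.
Local Open Scope classical_set_scope.
Local Open Scope ring_scope.

Section Defs.
Context {d : measure_display} {X : measurableType d} {R : realType}.

Definition is_metric (dist : X -> X -> R) : Prop :=
  (forall x y, 0 <= dist x y) /\
  (forall x y, dist x y = 0 <-> x = y) /\
  (forall x y, dist x y = dist y x) /\
  (forall x y z, dist x z <= dist x y + dist y z).

Definition metric_open (dist : X -> X -> R) (A : set X) : Prop :=
  forall x, A x -> exists2 e : R, 0 < e & [set y | dist x y < e] `<=` A.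

Definition metric_complete (dist : X -> X -> R) : Prop :=
  forall u : nat -> X,
    (forall e : R, 0 < e -> exists N, forall m n, (N <= m)%N -> (N <= n)%N ->
        dist (u m) (u n) < e) ->
    exists l, forall e : R, 0 < e -> exists N, forall n, (N <= n)%N -> dist (u n) l < e.

Definition metric_separable (dist : X -> X -> R) : Prop :=
  exists q : nat -> X, forall x (e : R), 0 < e -> exists n, dist x (q n) < e.

Definition standard_Borel : Prop :=
  exists dist : X -> X -> R,
    [/\ is_metric dist, metric_complete dist, metric_separable dist &
        (@measurable d X) = <<s metric_open dist >>].

Definition atomless (mu : {measure set X -> \bar R}) : Prop :=
  forall A, measurable A -> (0 < mu A)%E ->
    exists2 B, measurable B /\ B `<=` A & (0 < mu B)%E /\ (mu B < mu A)%E.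

(* ---- elements of Aut(X,mu), represented by a bimeasurable bijection
   T with inverse Ti preserving mu ---- *)
Definition mp_bij (mu : {measure set X -> \bar R}) (T Ti : X -> X) : Prop :=
  [/\ measurable_fun setT T, measurable_fun setT Ti,
      cancel T Ti, cancel Ti T &
      forall A, measurable A -> mu (T @^-1` A) = mu A].

Definition tpow (T Ti : X -> X) (k : int) : X -> X :=
  match k with
  | Posz n => iter n T
  | Negz n => iter n.+1 Ti
  end.

Definition aperiodic (mu : {measure set X -> \bar R}) (T : X -> X) : Prop :=
  {ae mu, forall x, forall n : nat, (0 < n)%N -> iter n T x <> x}.

Definition int_measurable (c : X -> int) : Prop :=
  forall k : int, measurable (c @^-1` [set k]).

Definition is_cocycle (mu : {measure set X -> \bar R}) (T Ti V : X -> X)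
    (c : X -> int) : Prop :=
  int_measurable c /\ {ae mu, forall x, V x = tpow T Ti (c x) x}.

Definition in_full_group (mu : {measure set X -> \bar R}) (T Ti U Ui : X -> X)
  : Prop :=
  mp_bij mu U Ui /\ exists c, is_cocycle mu T Ti U c.

Definition phi_int (mu : {measure set X -> \bar R}) (phi : R -> R)
    (c : X -> int) : \bar R :=
  (\int[mu]_x (phi `|(c x)%:~R|)%:E)%E.

Definition in_phi_full_group (mu : {measure set X -> \bar R}) (phi : R -> R)
    (T Ti U Ui : X -> X) : Prop :=
  mp_bij mu U Ui /\
  exists c, is_cocycle mu T Ti U c /\ (phi_int mu phi c < +oo)%E.

End Defs.

(* metric-compatible and sublinear functions phi : R_+ -> R_+
   (represented as R -> R, constrained on [0, +oo)) *)
Definition metric_compatible {R : realType} (phi : R -> R) : Prop :=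
  [/\ phi 0 = 0,
      (forall s t, 0 <= s -> 0 <= t -> phi (s + t) <= phi s + phi t),
      (forall s t, 0 <= s -> s <= t -> phi s <= phi t),
      (forall t, 0 < t -> 0 < phi t) &
      (forall t, 0 <= t -> 0 <= phi t)].

Definition sublinear {R : realType} (phi : R -> R) : Prop :=
  (phi t / t) @[t --> +oo] --> (0 : R).

(* Main.v *)
Require Import Defs.
From HB Require Import structures.
From mathcomp Require Import all_boot all_order all_algebra.
From mathcomp Require Import all_classical all_reals all_analysis.
From mathcomp Require Import ring lra zify measurable_realfun.
From Stdlib Require Import Lia.
Import Order.TTheory GRing.Theory Num.Theory.
Local Open Scope classical_set_scope.
Local Open Scope ring_scope.
Local Open Scope ring_scope.
Section TP.
Context {d : measure_display} {X : measurableType d}.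

Lemma tpowS (T Ti : X -> X) (h2 : cancel Ti T) (k : int) x :
  tpow T Ti (k + 1) x = T (tpow T Ti k x).
Proof.
case: k => [n|n].
  by have -> : Posz n + 1 = Posz n.+1 by lia.
case: n => [|n].
  by rewrite /= h2.
have -> : Negz n.+1 + 1 = Negz n.
  by rewrite !NegzE; lia.
by rewrite /= h2.
Qed.

Lemma tpowP (T Ti : X -> X) (h1 : cancel T Ti) (h2 : cancel Ti T) (k : int) x :
  tpow T Ti (k - 1) x = Ti (tpow T Ti k x).
Proof.
have -> : k = (k - 1) + 1 by rewrite subrK.
by rewrite tpowS // h1 addrK.
Qed.

Lemma tpowD (T Ti : X -> X) (h1 : cancel T Ti) (h2 : cancel Ti T) (a b : int) x :
  tpow T Ti a (tpow T Ti b x) = tpow T Ti (a + b) x.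
Proof.
case: a => [n|n].
  elim: n => [|n IH]; first by rewrite add0r.
  have -> : Posz n.+1 + b = (Posz n + b) + 1 by lia.
  by rewrite tpowS // -IH.
elim: n => [|n IH].
  have -> : Negz 0 + b = b - 1 by rewrite NegzE; lia.
  by rewrite tpowP.
have -> : Negz n.+1 + b = (Negz n + b) - 1 by rewrite !NegzE; lia.
by rewrite tpowP // -IH.
Qed.

Lemma tpow_inj (T Ti : X -> X) (h1 : cancel T Ti) (h2 : cancel Ti T) (a b : int) x :
  (forall n : nat, (0 < n)%N -> iter n T x <> x) ->
  tpow T Ti a x = tpow T Ti b x -> a = b.
Proof.
move=> ap e.
have e2 : x = tpow T Ti (b - a) x.
  have := congr1 (tpow T Ti (- a)) e.
  by rewrite !tpowD // addNr addrC.
case E: (b - a) => [n|n]; rewrite E in e2.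
  case: n E e2 => [|n] E e2; first by apply/eqP; rewrite eq_sym -subr_eq0 E.
  by exfalso; apply: (ap n.+1) => //.
exfalso; apply: (ap n.+1) => //.
rewrite {1}e2.
have H : forall m y, iter m T (iter m Ti y) = y.
  by elim=> // m IH y; rewrite iterSr iterS h2 IH.
exact: (H n.+1).
Qed.
End TP.

Local Open Scope ring_scope.
Section MP.
Context {d : measure_display} {X : measurableType d} {R : realType}.
Local Open Scope ereal_scope.

Lemma iter_measurable (U : X -> X) (mU : measurable_fun setT U) k :
  measurable_fun setT (iter k U).
Proof.
elim: k => [|k IH] /=; first exact: measurable_id.
exact: (measurableT_comp mU IH).
Qed.

Lemma preimT_measurable (V : X -> X) (mV : measurable_fun setT V) A :
  measurable A -> measurable (V @^-1` A).
Proof. by move=> mA; rewrite -[_ @^-1` _]setTI; exact: mV. Qed.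

Lemma iter_preserve (mu : {measure set X -> \bar R}) (U : X -> X)
  (mU : measurable_fun setT U)
  (pU : forall A, measurable A -> mu (U @^-1` A) = mu A) k A :
  measurable A -> mu (iter k U @^-1` A) = mu A.
Proof.
elim: k A => [|k IH] A mA //=.
have -> : (fun x => U (iter k U x)) @^-1` A = iter k U @^-1` (U @^-1` A) by [].
rewrite IH ?pU //; exact: preimT_measurable.
Qed.

Lemma ae_comp (mu : {measure set X -> \bar R}) (V : X -> X)
  (mV : measurable_fun setT V)
  (pV : forall A, measurable A -> mu (V @^-1` A) = mu A) (P : X -> Prop) :
  {ae mu, forall x, P x} -> {ae mu, forall x, P (V x)}.
Proof.
case=> N [mN N0 sN]; exists (V @^-1` N); split.
- exact: preimT_measurable.
- by rewrite pV.
- by move=> x /= nP; apply: sN.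
Qed.
End MP.

Local Open Scope ring_scope.
Section CS.
Context {d : measure_display} {X : measurableType d} {R : realType}.

Lemma cocycle_sum (mu : {measure set X -> \bar R}) (T Ti U Ui : X -> X)
  (hT : mp_bij mu T Ti) (hap : aperiodic mu T) (hU : mp_bij mu U Ui)
  (c1 : X -> int) (hc1 : is_cocycle mu T Ti U c1)
  (c : nat -> X -> int) (hc : forall n : nat, is_cocycle mu T Ti (iter n U) (c n)) :
  {ae mu, forall x, forall n, c n x = \sum_(k < n) c1 (iter k U x)}.
Proof.
case: hT => _ _ h1 h2 _.
case: hU => mU _ _ _ pU.
have A1 : {ae mu, forall x, forall k, U (iter k U x) = tpow T Ti (c1 (iter k U x)) (iter k U x)}.
  apply: ae_foralln => k.
  apply: (@ae_comp _ _ _ mu (iter k U) _ _ (fun y => U y = tpow T Ti (c1 y) y)).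
  - exact: iter_measurable.
  - exact: iter_preserve.
  - exact: hc1.2.
have A2 : {ae mu, forall x, forall n, iter n U x = tpow T Ti (c n x) x}.
  by apply: ae_foralln => n; exact: (hc n).2.
move: A1 A2 hap; apply: filterS3 => x H1 H2 H3 n.
have H4 : forall n, iter n U x = tpow T Ti (\sum_(k < n) c1 (iter k U x)) x.
  elim=> [|m IH]; first by rewrite big_ord0.
  by rewrite big_ord_recr /= H1 IH tpowD // addrC.
apply: (@tpow_inj _ _ T Ti h1 h2 _ _ x H3).
by rewrite -H2 -H4.
Qed.
End CS.

Local Open Scope ring_scope.
Section IM.
Context {d : measure_display} {X : measurableType d}.

Lemma const_set_measurable (P : Prop) : measurable [set _ : X | P].
Proof.
case: (pselect P) => h.
  by rewrite (_ : [set _ | P] = setT); [exact: measurableT| apply/seteqP; split].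
by rewrite (_ : [set _ | P] = set0); [exact: measurable0| apply/seteqP; split].
Qed.

Lemma int_measurable_comp (c : X -> int) (V : X -> X) :
  int_measurable c -> measurable_fun setT V -> int_measurable (fun x => c (V x)).
Proof. by move=> hc mV k; exact: (@preimT_measurable _ _ V mV (c @^-1` [set k]) (hc k)). Qed.

Lemma int_fun_measurable d' (Y : measurableType d') (c : X -> int) (G : int -> Y) :
  int_measurable c -> measurable_fun setT (fun x => G (c x)).
Proof.
move=> hc _ B mB; rewrite setTI.
have -> : (fun x => G (c x)) @^-1` B =
   \bigcup_(n : nat) ((c @^-1` [set Posz n] `&` [set _ | B (G (Posz n))]) `|`
                     (c @^-1` [set Negz n] `&` [set _ | B (G (Negz n))])).
  apply/seteqP; split => x /=.
    case E: (c x) => [n|n] Bx; exists n => //=; [left|right]; by rewrite E.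
  by case=> n _ [[/= -> ]|[/= -> ]].
apply: bigcupT_measurable => n.
by apply: measurableU; apply: measurableI => //; exact: const_set_measurable.
Qed.
End IM.

Local Open Scope ring_scope.
Section RI.
Context {R : realType}.

Definition gK (phi : R -> R) (K t : R) := if t <= K then 0 else phi t.

Lemma phi_sum_le (phi : R -> R) (hphi : metric_compatible phi) (t : nat -> R) n :
  (forall k, 0 <= t k) -> phi (\sum_(k < n) t k) <= \sum_(k < n) phi (t k).
Proof.
case: hphi => p0 pD pM _ pP t0.
elim: n => [|n IH]; first by rewrite !big_ord0 p0.
rewrite !big_ord_recr /=.
apply: le_trans (pD _ _ _ _) _ => //; first exact: sumr_ge0.
exact: lerD.
Qed.

Lemma phi_trunc (phi : R -> R) (hphi : metric_compatible phi) (t : nat -> R) n (K : R) :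
  0 <= K -> (forall k, 0 <= t k) ->
  phi (\sum_(k < n) t k) <= phi (n%:R * K) + \sum_(k < n) gK phi K (t k).
Proof.
move=> K0 t0; have hp := hphi; case: hphi => p0 pD pM _ pP.
pose h s := if s <= K then 0 else s.
have h0 k : 0 <= h (t k) by rewrite /h; case: ifP.
have le1 : \sum_(k < n) t k <= n%:R * K + \sum_(k < n) h (t k).
  have -> : n%:R * K = \sum_(k < n) K.
    by rewrite sumr_const card_ord mulr_natl.
  rewrite -big_split /=; apply: ler_sum => k _.
  rewrite /h; case: ifP => H; first by rewrite addr0.

  by rewrite lerDr.
apply: le_trans (pM _ _ _ le1) _; first exact: sumr_ge0.
apply: le_trans (pD _ _ _ _) _.
- by apply: mulr_ge0 => //; exact: ler0n.
- exact: sumr_ge0.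
apply: lerD => //.
apply: (le_trans (@phi_sum_le phi hp (fun k => h (t k)) n h0)).
apply: ler_sum => k _; rewrite /h /gK; case: ifP => //.
by rewrite p0.
Qed.

Lemma phi_int_sum (phi : R -> R) (hphi : metric_compatible phi) (a : nat -> int) n (K : R) :
  0 <= K ->
  phi `|(\sum_(k < n) a k)%:~R| <= phi (n%:R * K) + \sum_(k < n) gK phi K `|(a k)%:~R|.
Proof.
move=> K0; have hp := hphi; case: hphi => p0 pD pM _ pP.
apply: le_trans (@phi_trunc phi hp (fun k => `|(a k)%:~R|) n K K0 _); last by move=> k.
apply: pM => //.
rewrite rmorph_sum; exact: ler_norm_sum.
Qed.
End RI.

Local Open Scope ring_scope.
Section PF.
Context {d : measure_display} {X : measurableType d} {R : realType}.
Local Open Scope ereal_scope.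

Lemma integral_preserve (mu : {measure set X -> \bar R}) (V : X -> X)
  (mV : measurable_fun setT V)
  (pV : forall A, measurable A -> mu (V @^-1` A) = mu A)
  (f : X -> \bar R) (mf : measurable_fun setT f) (f0 : forall x, 0 <= f x) :
  \int[mu]_x f (V x) = \int[mu]_x f x.
Proof.
have := ge0_integral_pushforward mV mu measurableT mf (fun y _ => f0 y).
rewrite preimage_setT => <-.
apply: eq_measure_integral => A mA _.

by rewrite -pV.
Qed.
End PF.

Local Open Scope ring_scope.
Section IB.
Context {d : measure_display} {X : measurableType d} {R : realType}.
Local Open Scope ereal_scope.

Lemma phi_int_bound (mu : probability X R) (phi : R -> R) (hphi : metric_compatible phi)
  (T Ti : X -> X) (hT : mp_bij mu T Ti) (hap : aperiodic mu T)
  (U Ui : X -> X) (hU : mp_bij mu U Ui)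
  (c1 : X -> int) (hc1 : is_cocycle mu T Ti U c1)
  (c : nat -> X -> int) (hc : forall n : nat, is_cocycle mu T Ti (iter n U) (c n))
  (n : nat) (K : R) (K0 : (0 <= K)%R) :
  phi_int mu phi (c n) <= (phi (n%:R * K))%:E +
     \sum_(k < n) \int[mu]_x (gK phi K `|(c1 x)%:~R|)%:E.
Proof.
have hp := hphi; case: hphi => p0 pD pM _ pP.
have hcs := @cocycle_sum _ _ _ mu T Ti U Ui hT hap hU c1 hc1 c hc.
have mU : measurable_fun setT U by case: hU.
have pU : forall A, measurable A -> mu (U @^-1` A) = mu A by case: hU.
have gK0 : forall t, (0 <= t)%R -> (0 <= gK phi K t)%R.
  by move=> t t0; rewrite /gK; case: ifP => // _; exact: pP.
rewrite /phi_int.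
apply: le_trans (_ : _ <= \int[mu]_x ((phi (n%:R * K))%:E +
   \sum_(k < n) (gK phi K `|(c1 (iter k U x))%:~R|)%:E)) _.
  apply: ae_ge0_le_integral => //.
  - by move=> x _; rewrite lee_fin; apply: pP.
  - exact: (@int_fun_measurable _ _ _ _ _ (fun k : int => (phi `|k%:~R|)%:E) (hc n).1).
  - move=> x _; apply: adde_ge0; first by rewrite lee_fin; apply: pP; apply: mulr_ge0.
    by apply: sume_ge0 => k _; rewrite lee_fin; apply: gK0.
  - apply: emeasurable_funD; first exact: measurable_cst.
    apply: emeasurable_sum => k.
    apply: (@int_fun_measurable _ _ _ _ _ (fun k : int => (gK phi K `|k%:~R|)%:E)).
    apply: int_measurable_comp; first exact: hc1.1.
    exact: iter_measurable.
  - apply: filterS hcs => x H _.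
    rewrite H sumEFin -EFinD lee_fin.
    exact: (@phi_int_sum R phi hp (fun k => c1 (iter k U x)) n K K0).
rewrite ge0_integralD //.
- have pT : (mu : {measure set X -> \bar R}) [set: X] = 1 := probability_setT mu.
  rewrite (integral_cst mu measurableT) pT mule1 leeD2l //.
  rewrite ge0_integral_sum //.
  + apply: lee_sum => k _.
    rewrite (@integral_preserve _ _ _ mu (iter k U) _ _ (fun y => (gK phi K `|(c1 y)%:~R|)%:E)) //.
    * exact: iter_measurable.
    * exact: iter_preserve.
    * exact: (@int_fun_measurable _ _ _ _ _ (fun k : int => (gK phi K `|k%:~R|)%:E) hc1.1).
    * by move=> x; rewrite lee_fin; apply: gK0.
  + move=> k.
    apply: (@int_fun_measurable _ _ _ _ _ (fun k : int => (gK phi K `|k%:~R|)%:E)).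
    apply: int_measurable_comp; first exact: hc1.1.
    exact: iter_measurable.
  + by move=> k x _; rewrite lee_fin; apply: gK0.
- by move=> x _; rewrite lee_fin; apply: pP; apply: mulr_ge0.
- by move=> x _; apply: sume_ge0 => k _; rewrite lee_fin; apply: gK0.
- apply: emeasurable_sum => k.
  apply: (@int_fun_measurable _ _ _ _ _ (fun k : int => (gK phi K `|k%:~R|)%:E)).
  apply: int_measurable_comp; first exact: hc1.1.
  exact: iter_measurable.
Qed.
End IB.

Local Open Scope ring_scope.
Section TL.
Context {d : measure_display} {X : measurableType d} {R : realType}.
Local Open Scope ereal_scope.

Lemma tail_cvg (mu : {measure set X -> \bar R}) (phi : R -> R) (hphi : metric_compatible phi)
  (c1 : X -> int) (hm : int_measurable c1) (hfin : phi_int mu phi c1 < +oo) :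
  (fun K : nat => \int[mu]_x (gK phi K%:R `|(c1 x)%:~R|)%:E) @ \oo --> 0.
Proof.
have hp := hphi; case: hphi => p0 pD pM _ pP.
have gK0 : forall K t, (0 <= t)%R -> (0 <= gK phi K t)%R.
  by move=> K t t0; rewrite /gK; case: ifP => // _; exact: pP.
pose f_ := (fun (K : nat) x => (gK phi K%:R `|(c1 x)%:~R|)%:E).
pose g := (fun x => (phi `|(c1 x)%:~R|)%:E).
have mf_ : forall K, measurable_fun setT (f_ K).
  move=> K; exact: (@int_fun_measurable _ _ _ _ _ (fun k : int => (gK phi K%:R `|k%:~R|)%:E) hm).
have mf : measurable_fun [set: X] (cst (0 : \bar R) : X -> \bar R) by exact: measurable_cst.
have ff : {ae mu, forall x, setT x -> f_ ^~ x @ \oo --> cst 0 x}.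
  apply: aeW => x _.
  apply: cvg_near_cst.
  exists (`|c1 x|%N) => // K /= hK.
  rewrite /f_ /gK ifT //.
  rewrite -intr_norm -natr_absz ler_nat; exact: hK.
have ig : mu.-integrable setT g.
  apply/integrableP; split.
    exact: (@int_fun_measurable _ _ _ _ _ (fun k : int => (phi `|k%:~R|)%:E) hm).
  rewrite (eq_integral (fun x => (phi `|(c1 x)%:~R|)%:E)) //.
  by move=> x _; rewrite gee0_abs // lee_fin; apply: pP.
have fg : {ae mu, forall x K, setT x -> `|f_ K x| <= g x}.
  apply: aeW => x K _.
  rewrite gee0_abs ?lee_fin; last exact: gK0.
  by rewrite /gK; case: ifP => // _; exact: pP.
have [_ _ H] := dominated_convergence measurableT mf_ mf ff ig fg.
by rewrite integral0 in H.
Qed.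
End TL.

Theorem mainTheorem13 (d : measure_display) (X : measurableType d) (R : realType)
  (mu : probability X R)
  (hstd : @standard_Borel d X R) (hatom : atomless mu)
  (phi : R -> R) (hphi : metric_compatible phi) (hsub : sublinear phi)
  (T Ti : X -> X) (hT : mp_bij mu T Ti) (hap : aperiodic mu T)
  (U Ui : X -> X) (hU : in_phi_full_group mu phi T Ti U Ui)
  (c : nat -> X -> int) (hc : forall n : nat, is_cocycle mu T Ti (iter n U) (c n)) :
  (fun n : nat => ((n%:R : R)^-1)%:E * phi_int mu phi (c n))%E @ \oo --> (0 : \bar R)%E.
Proof.
case: hU => hUb [c1 [hc1 hfin]].
have hp := hphi; case: hphi => p0 pD pM pPos pP.
have gK0 : forall K t, (0 <= t)%R -> (0 <= gK phi K t)%R.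
  by move=> K t t0; rewrite /gK; case: ifP => // _; exact: pP.
pose J K := (\int[mu]_x (gK phi K `|(c1 x)%:~R|)%:E)%E.
have J0 K : (0 <= J K)%E.
  by apply: integral_ge0 => x _; rewrite lee_fin; apply: gK0.
have Jfin K : J K \is a fin_num.
  rewrite ge0_fin_numE //; apply: le_lt_trans hfin.
  apply: ge0_le_integral => //.
  - by move=> x _; rewrite lee_fin; apply: gK0.
  - exact: (@int_fun_measurable _ _ _ _ _ (fun k : int => (gK phi K `|k%:~R|)%:E) hc1.1).
  - exact: (@int_fun_measurable _ _ _ _ _ (fun k : int => (phi `|k%:~R|)%:E) hc1.1).
  - by move=> x _; rewrite lee_fin /gK; case: ifP => // _; apply: pP.
have Ibd n K (K0 : (0 <= K)%R) :
    (phi_int mu phi (c n) <= (phi (n%:R * K) + n%:R * fine (J K))%:E)%E.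
  apply: le_trans (@phi_int_bound _ _ _ mu phi hp T Ti hT hap U Ui hUb c1 hc1 c hc n K K0) _.
  rewrite -/(J K) -(fineK (Jfin K)) sumEFin sumr_const card_ord -EFinD mulr_natl /=.
  by rewrite mulr_natl.
have I0 n : (0 <= phi_int mu phi (c n))%E.
  by apply: integral_ge0 => x _; rewrite lee_fin; apply: pP.
have Ifin n : phi_int mu phi (c n) \is a fin_num.
  rewrite ge0_fin_numE //; apply: le_lt_trans (Ibd n 0 (lexx _)) _.
  exact: ltry.
apply/fine_cvgP; split.
  by apply: nearW => n; rewrite fin_numM.
apply/cvgrPdist_lt => eps eps0.
have eps2 : (0 < eps / 2)%R by rewrite divr_gt0.
have TC := @tail_cvg _ _ _ mu phi hp c1 hc1.1 hfin.
move/fine_cvgP: TC => [_ /cvgrPdist_lt /(_ (eps/2) eps2)] [N _ HN].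
have := HN N.+1 (leqnSn N).
rewrite /= -/(J N.+1%:R).
set K := (N.+1)%:R; set j := fine (J K).
rewrite sub0r normrN => hj.
have j0 : (0 <= j)%R by apply: fine_ge0.
have K1 : (1 <= K)%R by rewrite /K ler1n.
have K0 : (0 < K)%R by apply: lt_le_trans K1.
pose e := eps / 2 / K.
have e0 : (0 < e)%R by rewrite divr_gt0.
move/cvgrPdist_lt: hsub => /(_ e e0) [M [Mreal HM]].
exists (Num.trunc `|M|).+1 => // n /= hn.
have n1 : (1 <= n)%N by apply: leq_ltn_trans hn.
have n0 : (0 < n%:R :> R)%R by rewrite ltr0n.
have nM : (M < n%:R)%R.
  apply: le_lt_trans (real_ler_norm Mreal) _.
  apply: lt_le_trans (truncnS_gt _) _.
  by rewrite ler_nat.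
have nK : (M < n%:R * K)%R.
  apply: lt_le_trans nM _; rewrite ler_peMr //; exact: ltW.
have hq := HM _ nK.
set q := phi (n%:R * K) / (n%:R * K) in hq.
have nK0 : (n%:R * K != 0 :> R)%R by rewrite mulf_neq0 // gt_eqF.
have Pq : phi (n%:R * K) = (q * (n%:R * K))%R by rewrite /q divfK.
have q0 : (0 <= q)%R by rewrite /q divr_ge0 ?pP // mulr_ge0 // ltW.
rewrite sub0r normrN ger0_norm // in hq.
have aE := fineK (Ifin n).
set a := fine (phi_int mu phi (c n)) in aE.
have a0 : (0 <= a)%R by rewrite /a fine_ge0.
have ha : (a <= phi (n%:R * K) + n%:R * j)%R.
  by rewrite -lee_fin aE; apply: Ibd; exact: ltW.
rewrite -aE -EFinM /= sub0r normrN ger0_norm; last first.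
  by rewrite mulr_ge0 // invr_ge0 ltW.
have h1 : (n%:R^-1 * a <= n%:R^-1 * (q * (n%:R * K) + n%:R * j))%R.
  rewrite -Pq; apply: ler_wpM2l ha; by rewrite invr_ge0 ltW.
have nn0 : (n%:R != 0 :> R)%R by rewrite gt_eqF.
have h2 : (n%:R^-1 * (q * (n%:R * K) + n%:R * j) = q * K + j)%R.
  by field.
have h3 : (q * K < e * K)%R by rewrite ltr_pM2r.
have h4 : (e * K = eps / 2)%R by rewrite /e divfK // gt_eqF.
have h5 : (j < eps / 2)%R by apply: le_lt_trans (ler_norm _) hj.
lra.
Qed.
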